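(* Let $G=(V,E)$ be a connected undirected graph on $n$ nodes with Laplacian $L$, let $\kappa_1,\dots,\kappa_n>0$, $D_\kappa=\mathrm{diag}(\kappa_1,\dots,\kappa_n)$, and for $S\subseteq V$ let $Q_S=L+D_\kappa D_S$, where $D_S$ is the diagonal $0/1$ matrix with $(D_S)_{ii}=1$ iff $i\in S$ (write $Q_v$ for $Q_{\{v\}}$). For nonempty $S$ let $H(S)=\frac12\mathrm{tr}(Q_S^{-1})$. Let $k\ge1$ be an integer, let $\hat H=\min\{H(S): S\subseteq V,\ S\neq\emptyset,\ |S|\le k\}$, and let $B=\max_{v\in V}\mathrm{tr}(Q_v^{-1})$. Let $S_g$ be the output of the following Greedy Algorithm: initialize $S=\{v\}$ where $v$ minimizes $\mathrm{tr}(Q_v^{-1})$ over $v\in V$; then for $i=2,\dots,k$: choose $v\in V\setminus S$ minimizing $\mathrm{tr}(Q_{S\cup\{v\}}^{-1})$; if $\mathrm{tr}(Q_{S\cup\{v\}}^{-1})<\mathrm{tr}(Q_S^{-1})$ set $S\leftarrow S\cup\{v\}$, otherwise stop and return $S$; after the loop return $S$. (Ties are broken arbitrarily.) Then: (1) if $|S_g|<k$, then $H(S_g)=\hat H$, i.e., $S_g$ is an optimal leader set; (2) if $|S_g|=k$, then $H(S_g)\le \left(1-\frac1e\right)\hat H+\frac{B}{e}$.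
   Context: For nonempty $S$, $Q_S$ is positive definite. $H(S)$ is the total steady-state variance of the leader–follower consensus dynamics $\dot x=-(L+D_\kappa D_S)x+w$ with white noise $w$, where $S$ is the set of leaders; the $k$-leader selection problem asks to minimize $H(S)$ subject to $|S|\le k$. *)

(* Defs.v *)
From HB Require Import structures.
From mathcomp Require Import all_boot all_order all_algebra.
From mathcomp Require Import reals sequences exp.
Set Implicit Arguments. Unset Strict Implicit. Unset Printing Implicit Defensive.
Import Order.TTheory GRing.Theory Num.Theory.
Local Open Scope ring_scope.

Section LeaderSelection.
Variables (R : realType) (n : nat).

Definition simple_graph (e : rel 'I_n) : Prop :=
  (forall i j, e i j = e j i) /\ (forall i, ~~ e i i).

Definition connected_graph (e : rel 'I_n) : Prop :=
  forall i j, connect e i j.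

Definition laplacian (e : rel 'I_n) : 'M[R]_n :=
  \matrix_(i, j) (if i == j then (#|[set u | e i u]|)%:R
                  else if e i j then -1 else 0).

Definition DkDS (kappa : 'I_n -> R) (S : {set 'I_n}) : 'M[R]_n :=
  diag_mx (\row_i (if i \in S then kappa i else 0)).

Definition QS (e : rel 'I_n) (kappa : 'I_n -> R) (S : {set 'I_n}) : 'M[R]_n :=
  laplacian e + DkDS kappa S.

Definition trQinv e kappa (S : {set 'I_n}) : R := \tr (invmx (QS e kappa S)).

Definition Hval e kappa (S : {set 'I_n}) : R := trQinv e kappa S / 2.

Definition feasible (k : nat) (S : {set 'I_n}) : bool := (S != set0) && (#|S| <= k)%N.

Definition is_opt_value e kappa (k : nat) (hhat : R) : Prop :=
  (exists2 S, feasible k S & Hval e kappa S = hhat) /\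
  (forall S, feasible k S -> hhat <= Hval e kappa S).

Definition is_B e kappa (b : R) : Prop :=
  (exists v, trQinv e kappa [set v] = b) /\
  (forall v, trQinv e kappa [set v] <= b).

(* Sg is a possible output of the greedy algorithm (for some tie-breaking).
   A run is the sequence s = [v1; ...; vm] of nodes added, in order. *)
Definition greedy_output e kappa (k : nat) (Sg : {set 'I_n}) : Prop :=
  exists s : seq 'I_n,
    [/\ (0 < size s <= k)%N,
        (forall x0 v, trQinv e kappa [set head x0 s] <= trQinv e kappa [set v]),
        (forall i x0, (0 < i < size s)%N ->
           let S := [set x in take i s] in
           let vi := nth x0 s i in
           [/\ vi \notin S,
               (forall w, w \notin S ->
                  trQinv e kappa (S :|: [set vi]) <= trQinv e kappa (S :|: [set w]))
             & trQinv e kappa (S :|: [set vi]) < trQinv e kappa S]),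
        Sg = [set x in s]
      & (* if fewer than k nodes were added, the algorithm stopped early:
           either V \ S is empty (no candidate), or the chosen minimizer v
           does not decrease the trace *)
        (size s < k)%N ->
          ([set: 'I_n] :\: Sg = set0 \/
           exists2 v, v \notin Sg &
             (forall w, w \notin Sg ->
                trQinv e kappa (Sg :|: [set v]) <= trQinv e kappa (Sg :|: [set w])) /\
             trQinv e kappa Sg <= trQinv e kappa (Sg :|: [set v]))].

End LeaderSelection.

(* Main.v *)
Require Import Defs.
From HB Require Import structures.
From mathcomp Require Import all_boot all_order all_algebra.
From mathcomp Require Import reals sequences exp.
From mathcomp Require Import ring lra.
Import Order.TTheory GRing.Theory Num.Theory.
Local Open Scope ring_scope.

Lemma key (R : realFieldType) (a b p q r X Y Z : R) : 0 <= a -> a * p <= 1 -> 0 <= b -> 0 <= q -> 0 <= r ->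
  0 <= Z -> 0 <= X -> 0 <= Y -> r * X <= p * Z -> r * Y <= q * Z -> 0 <= q - a * r * r ->
  b / (1 + b * (q - a * r * r)) * (Y - a * r * Z - a * r * Z + a ^+ 2 * r * r * X)
   <= b / (1 + b * q) * Y.
Proof.
move=> a0 ap b0 q0 r0 Z0 X0 Y0 h1 h2 q1.
set D1 := 1 + b * (q - a * r * r); set D2 := 1 + b * q.
have D1p : 0 < D1 by rewrite /D1; nra.
have D2p : 0 < D2 by rewrite /D2; nra.
set Y' := Y - a * r * Z - a * r * Z + a ^+ 2 * r * r * X.
have i1 : a * (r * X) <= a * (p * Z) by apply: ler_wpM2l.
have i2 : (a * p) * Z <= 1 * Z by apply: ler_wpM2r.
have W : Z <= 2 * Z - a * r * X by nra.
have i3 : Z * D2 <= (2 * Z - a * r * X) * D2 by apply: ler_wpM2r => //; exact: ltW.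
have i4 : b * (r * Y) <= b * (q * Z) by apply: ler_wpM2l.
have inner : 0 <= (2 * Z - a * r * X) * D2 - b * r * Y by rewrite /D2 in i3 *; nra.
have ar0 : 0 <= a * r by apply: mulr_ge0.
have main : Y' * D2 <= Y * D1.
  have : 0 <= (a * r) * ((2 * Z - a * r * X) * D2 - b * r * Y) by apply: mulr_ge0.
  rewrite /Y' /D1 /D2 => h; rewrite -subr_ge0.
  have -> : Y * (1 + b * (q - a * r * r)) - (Y - a * r * Z - a * r * Z + a ^+ 2 * r * r * X) * (1 + b * q)
    = a * r * ((2 * Z - a * r * X) * (1 + b * q) - b * r * Y) by ring.
  exact: h.
rewrite -subr_ge0.
have -> : b / D2 * Y - b / D1 * Y' = b * (Y * D1 - Y' * D2) / (D1 * D2).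
  by field; apply/andP; split; apply: lt0r_neq0.
apply: divr_ge0; last by apply: mulr_ge0; apply: ltW.
by apply: mulr_ge0 => //; rewrite subr_ge0.
Qed.

Lemma bernoulli (R : realFieldType) (x : R) m : 0 <= x -> 1 + m%:R * x <= (1 + x) ^+ m.
Proof.
move=> x0; elim: m => [|m IH]; first by rewrite mul0r addr0 expr0.
rewrite exprS.
have h1 : 0 <= 1 + x by lra.
have := ler_wpM2l h1 IH.
have : 0 <= m%:R * x * x by apply: mulr_ge0 => //; apply: mulr_ge0.
rewrite -natr1; nra.
Qed.

Lemma c_half (R : realFieldType) k : (2 <= k)%N -> 2 * (1 - (k%:R : R)^-1) ^+ k.-1 <= 1.
Proof.
case: k => [//|m]; case: m => [//|m] _ /=.
set M : R := (m.+1)%:R.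
have M0 : 0 < M by rewrite /M ltr0n.
have Mi : 0 <= M^-1 by rewrite invr_ge0; apply: ltW.
have hb := @bernoulli R M^-1 m.+1 Mi.
rewrite -/M mulfV ?lt0r_neq0 // in hb.
have prod : (1 - ((m.+2)%:R : R)^-1) * (1 + M^-1) = 1.
  have -> : ((m.+2)%:R : R) = M + 1 by rewrite /M -natr1.
  by field; apply/andP; split; apply: lt0r_neq0 => //; lra.
set c := (1 - ((m.+2)%:R : R)^-1) ^+ m.+1.
have cprod : c * (1 + M^-1) ^+ m.+1 = 1 by rewrite /c -exprMn prod expr1n.
have c0 : 0 <= c.
  rewrite /c; apply: exprn_ge0; rewrite subr_ge0 invf_le1 ?ltr0n // ler1n //.
have : c * 2 <= c * (1 + M^-1) ^+ m.+1 by apply: ler_wpM2l => //; rewrite (natrD R 1 1) in hb; lra.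
rewrite cprod; lra.
Qed.

Lemma e_ge2 (R : realType) : 2 <= expR (1 : R).
Proof. by have := @expR_ge1Dx R 1. Qed.

Lemma e_le4 (R : realType) : expR (1 : R) <= 4.
Proof.
have h : expR (1 : R) = expR (2^-1) * expR (2^-1) by rewrite -expRD; congr expR; field.
have h2 : 2^-1 <= expR (- (2^-1 : R)) by have := @expR_ge1Dx R (- 2^-1); lra.
have p : 0 < expR (2^-1 : R) := expR_gt0 _.
have h3 : expR (2^-1 : R) <= 2.
  rewrite expRN in h2.
  have := ler_wpM2l (ltW p) h2; rewrite mulfV ?lt0r_neq0 //.
  lra.
rewrite h; nra.
Qed.

Lemma final_arith (R : realType) (Fg Fo B : R) : 0 <= Fo -> Fo <= B -> Fg <= (Fo + B) / 2 ->
  Fg / 2 <= (1 - (expR 1)^-1) * (Fo / 2) + B / expR 1.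
Proof.
move=> h1 h2 h3.
have e2 := e_ge2 R; have e4 := e_le4 R.
set E := expR (1 : R) in e2 e4 *.
have E0 : 0 < E by lra.
have -> : (1 - E^-1) * (Fo / 2) + B / E = ((E - 1) * Fo + 2 * B) / (2 * E) by field; lra.
rewrite ler_pdivlMr; last by lra.
have : (E - 2) * Fo + (4 - E) * B >= 0 by nra.
nra.
Qed.

Definition pre {n : nat} (s : seq 'I_n) i := [set x in take i s].

Lemma pre1 {n : nat} (s : seq 'I_n) (x0 : 'I_n) : (0 < size s)%N -> pre s 1 = [set head x0 s].
Proof.
case: s => [//|x t] _; apply/setP => y.
by rewrite /pre; rewrite -/(take 1 (x :: t)); rewrite (_ : take 1 (x :: t) = [:: x]) ?inE //= take0.
Qed.

Section Proof3.
Variables (R : realType) (n : nat) (e : rel 'I_n) (kappa : 'I_n -> R).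
Hypotheses (esymm : forall i j, e i j = e j i) (eirr : forall i, ~~ e i i)
  (econn : connected_graph e) (kpos : forall i, 0 < kappa i).

Local Notation Q := (QS e kappa).
Local Notation F := (trQinv e kappa).

Definition dS (S : {set 'I_n}) i := if i \in S then kappa i else 0.
Definition deg i : R := (#|[set u | e i u]|)%:R.

Lemma dS_ge0 S i : 0 <= dS S i.
Proof. by rewrite /dS; case: ifP => // _; apply: ltW. Qed.

Lemma QE S i j : Q S i j = (i == j)%:R * (deg i + dS S i) - (e i j)%:R.
Proof.
rewrite /QS /laplacian /DkDS !mxE /dS /deg.
case: eqVneq => [<-|ne].
  by rewrite (negbTE (eirr i)) mulr1n mul1r subr0.
by rewrite mulr0n addr0 mul0r sub0r; case: (e i j) => //; rewrite oppr0.
Qed.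

Lemma Qsym S : (Q S)^T = Q S.
Proof.
apply/matrixP => i j; rewrite mxE !QE esymm eq_sym.
by case: eqVneq => [->|]; rewrite ?mul0r.
Qed.

Lemma Qmul S (f : 'I_n -> R) i :
  \sum_k Q S i k * f k = dS S i * f i + \sum_(k | e i k) (f i - f k).
Proof.
under eq_bigr => k _ do rewrite QE mulrBl.
rewrite sumrB (bigD1 i) //= eqxx mul1r big1; last first.
  by move=> k /negbTE; rewrite eq_sym => ->; rewrite !mul0r.
rewrite addr0 sumrB sumr_const.
have -> : \sum_k (e i k)%:R * f k = \sum_(k | e i k) f k.
  by rewrite [RHS]big_mkcond /=; apply: eq_bigr => k _; case: (e i k); rewrite ?mul1r ?mul0r.
rewrite /deg.
have -> : #|[pred k | e i k]| = #|[set u | e i u]| by apply: eq_card => k; rewrite inE.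
rewrite mulrDl mulr_natl; lra.
Qed.

Lemma MP S (f : 'I_n -> R) : S != set0 ->
  (forall i, 0 <= f i \/ 0 <= \sum_k Q S i k * f k) -> forall i, 0 <= f i.
Proof.
move=> /set0Pn [s0 s0S] H i.
case: (@arg_minP _ _ _ s0 predT f) => // i0 _ Hmin.
apply: (le_trans _ (Hmin i isT)).
rewrite leNgt; apply/negP => neg.
set m := f i0 in neg.
have step : forall j, f j = m -> dS S j = 0 /\ forall l, e j l -> f l = m.
  move=> j fj; have [h|Hq] := H j; first by exfalso; lra.
  rewrite Qmul fj in Hq.
  have t1 : forall l, e j l -> 0 <= f l - m by move=> l _; rewrite subr_ge0 /m Hmin.
  have s1 : 0 <= \sum_(l | e j l) (f l - m) := sumr_ge0 _ t1.
  have eqs : \sum_(l | e j l) (m - f l) = - \sum_(l | e j l) (f l - m).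
    by rewrite -sumrN; apply: eq_bigr => l _; rewrite opprB.
  rewrite eqs in Hq.
  have d0 := dS_ge0 S j.
  have h1 : dS S j * m <= 0 by nra.
  have hs : \sum_(l | e j l) (f l - m) = 0 by lra.
  split.
    have : dS S j * m = 0 by lra.
    move/eqP; rewrite mulf_eq0 => /orP [/eqP//|/eqP m0]; lra.
  by move=> l ejl; have := psumr_eq0P t1 hs ejl; lra.
have cl : closed e [pred j | f j == m].
  apply: intro_closed; first by apply: sym_connect_sym => a b; exact: esymm.
  move=> a b eab; rewrite !inE => /eqP fa; apply/eqP; exact: (step a fa).2 b eab.
have := closed_connect cl (econn i0 s0); rewrite !inE eqxx => /esym/eqP fs0.
by have := (step s0 fs0).1; rewrite /dS s0S => k0; have := kpos s0; lra.
Qed.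

Lemma eq_ler0 {x : R} : x = 0 -> 0 <= x.
Proof. by move=> ->. Qed.

Lemma QsymE S i j : Q S i j = Q S j i.
Proof. by rewrite -{1}(Qsym S) mxE. Qed.

Lemma Qunit S : S != set0 -> Q S \in unitmx.
Proof.
move=> S0; rewrite -row_free_unit -kermx_eq0; apply/eqP.
apply/row_matrixP => i; rewrite row0.
set r := row i (kermx (Q S)).
have hr : r *m Q S = 0 by rewrite /r -row_mul mulmx_ker row0.
have hq : forall j, \sum_k Q S j k * r 0 k = 0.
  move=> j; have := congr1 (fun M : 'rV_n => M 0 j) hr; rewrite !mxE => E; rewrite -[RHS]E.
  by apply: eq_bigr => k _; rewrite mulrC QsymE.
have p1 := @MP S (fun k => r 0 k) S0 (fun j => or_intror (eq_ler0 (hq j))).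
have hq2 : forall j, \sum_k Q S j k * (- r 0 k) = 0.
  move=> j; have h : \sum_k Q S j k * (- r 0 k) = - \sum_k Q S j k * r 0 k.
    by rewrite -sumrN; apply: eq_bigr => k _; rewrite mulrN.
  by rewrite h hq oppr0.
have p2 := @MP S (fun k => - r 0 k) S0 (fun j => or_intror (eq_ler0 (hq2 j))).
apply/rowP => k; rewrite [RHS]mxE; have := p1 k; have := p2 k; lra.
Qed.

Lemma QG S : S != set0 -> Q S *m invmx (Q S) = 1%:M.
Proof. by move=> S0; apply: mulmxV; apply: Qunit. Qed.

Lemma QGE S k j : S != set0 -> \sum_l Q S k l * invmx (Q S) l j = (k == j)%:R.
Proof. by move=> S0; have := congr1 (fun M : 'M[R]_n => M k j) (@QG S S0); rewrite !mxE. Qed.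

Lemma Gsym S i j : invmx (Q S) i j = invmx (Q S) j i.
Proof. by rewrite -{1}(Qsym S) -trmx_inv mxE. Qed.

Lemma Gnn S i j : S != set0 -> 0 <= invmx (Q S) i j.
Proof.
move=> S0; apply: (@MP S (fun k => invmx (Q S) k j) S0) => k.
by right; rewrite QGE // ler0n.
Qed.

Lemma Gpath S u v i : S != set0 ->
  0 <= invmx (Q S) u u * invmx (Q S) i v - invmx (Q S) u v * invmx (Q S) i u.
Proof.
move=> S0; set G := invmx (Q S).
apply: (@MP S (fun k => G u u * G k v - G u v * G k u) S0) => k.
case: (eqVneq k u) => [->|ne]; first by left; rewrite [G u v * _]mulrC subrr.
right.
have eq : forall l, Q S k l * (G u u * G l v - G u v * G l u)
   = G u u * (Q S k l * G l v) - G u v * (Q S k l * G l u) by move=> l; ring.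
under eq_bigr do rewrite eq.
rewrite sumrB -!mulr_sumr !QGE // (negbTE ne) mulr0 subr0.
by apply: mulr_ge0; [apply: Gnn | apply: ler0n].
Qed.

Lemma Eright (A : 'M[R]_n) u i j : (A *m delta_mx u u) i j = A i u * (j == u)%:R.
Proof.
rewrite !mxE (bigD1 u) //= big1 ?addr0; first by rewrite mxE eqxx.
by move=> k /negbTE ku; rewrite mxE ku mulr0.
Qed.

Lemma Eleft (A : 'M[R]_n) u i j : (delta_mx u u *m A) i j = (i == u)%:R * A u j.
Proof.
rewrite !mxE (bigD1 u) //= big1 ?addr0; first by rewrite mxE eqxx andbT.
by move=> k /negbTE ku; rewrite mxE ku andbF mul0r.
Qed.

Lemma AEB (A B : 'M[R]_n) u i j : (A *m delta_mx u u *m B) i j = A i u * B u j.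
Proof.
rewrite mxE (bigD1 u) //= big1 ?addr0; first by rewrite Eright eqxx mulr1.
by move=> k /negbTE ku; rewrite Eright ku mulr0 mul0r.
Qed.

Lemma EAE (A : 'M[R]_n) u : delta_mx u u *m A *m delta_mx u u = A u u *: delta_mx u u.
Proof.
apply/matrixP => i j; rewrite Eright Eleft !mxE.
by case: (i == u); case: (j == u); rewrite /= ?mulr1 ?mulr0 ?mul1r ?mul0r.
Qed.

Lemma QSU (S : {set 'I_n}) (u : 'I_n) : u \notin S -> Q (S :|: [set u]) = Q S + kappa u *: delta_mx u u.
Proof.
move=> uS; apply/matrixP => i j; rewrite [RHS]mxE [X in _ = _ + X]mxE !QE /dS !inE mxE.
case: (eqVneq i j) => [<-|ij]; last first.
  have -> : (i == u) && (j == u) = false.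
    by apply/negP => /andP [/eqP iu /eqP ju]; move: ij; rewrite iu ju eqxx.
  by rewrite mulr0 addr0 (_ : false%:R = 0 :> R) // !mul0r.
rewrite andbb.
case: (eqVneq i u) => [->|iu]; first by rewrite (negbTE uS) /= !mul1r mulr1; ring.
by rewrite /= orbF mulr0 addr0.
Qed.

Lemma nonemptyU (S : {set 'I_n}) (u : 'I_n) : S :|: [set u] != set0.
Proof. by apply/set0Pn; exists u; rewrite !inE eqxx orbT. Qed.

Lemma inv_update (S : {set 'I_n}) (u : 'I_n) : S != set0 -> u \notin S ->
  invmx (Q (S :|: [set u])) = invmx (Q S) -
    (kappa u / (1 + kappa u * invmx (Q S) u u)) *: (invmx (Q S) *m delta_mx u u *m invmx (Q S)).
Proof.
move=> S0 uS.
set G := invmx (Q S); set c := kappa u; set a := c / (1 + c * G u u); set E := delta_mx u u.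
have hG : 0 <= G u u by apply: Gnn.
have hc : 0 < c by apply: kpos.
have nz : 1 + c * G u u != 0 by rewrite lt0r_neq0 //; nra.
have prod : Q (S :|: [set u]) *m (G - a *: (G *m E *m G)) = 1%:M.
  rewrite QSU // mulmxDl !mulmxBr QG // -!scalemxAr !mulmxA QG // mul1mx.
  rewrite -!scalemxAl EAE -scalemxAl !scalerA -/E.
  apply/matrixP => i j; rewrite !mxE.
  set X := \sum_j0 _.
  have ha : a * (1 + c * G u u) = c by rewrite /a mulrVK ?unitfE.
  rewrite -[in RHS](addr0 (i == j)%:R) -addrA; congr (_ + _).
  rewrite -/c; transitivity (X * (c - a * (1 + c * G u u))); first by ring.
  by rewrite ha subrr mulr0.
have uQ : Q (S :|: [set u]) \in unitmx by apply: Qunit; apply: nonemptyU.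
by rewrite -[LHS]mulmx1 -prod mulmxA mulVmx // mul1mx.
Qed.

Lemma delta_F (S : {set 'I_n}) (u : 'I_n) : S != set0 -> u \notin S ->
  F S - F (S :|: [set u]) =
  kappa u / (1 + kappa u * invmx (Q S) u u) * (invmx (Q S) *m invmx (Q S)) u u.
Proof.
move=> S0 uS; rewrite /trQinv inv_update // raddfB /= mxtraceZ.
have -> : \tr (invmx (Q S) *m delta_mx u u *m invmx (Q S)) = (invmx (Q S) *m invmx (Q S)) u u.
  by rewrite /mxtrace mxE; apply: eq_bigr => i _; rewrite AEB mulrC.
ring.
Qed.

Lemma GG_nn (S : {set 'I_n}) i j : S != set0 -> 0 <= (invmx (Q S) *m invmx (Q S)) i j.
Proof. by move=> S0; rewrite mxE; apply: sumr_ge0 => k _; apply: mulr_ge0; apply: Gnn. Qed.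

Lemma GG_sym (S : {set 'I_n}) i j :
  (invmx (Q S) *m invmx (Q S)) i j = (invmx (Q S) *m invmx (Q S)) j i.
Proof. by rewrite !mxE; apply: eq_bigr => k _; rewrite mulrC (Gsym S k i) (Gsym S j k). Qed.

Lemma X_pos (S : {set 'I_n}) u : S != set0 -> 0 < (invmx (Q S) *m invmx (Q S)) u u.
Proof.
move=> S0; set G := invmx (Q S).
rewrite lt0r GG_nn // andbT; apply/eqP => X0.
have h : forall i, G i u = 0.
  move=> i; have := @psumr_eq0P R _ predT (fun k => G k u * G k u).
  move=> /(_ _ _ i isT) h.
  suff : G i u * G i u = 0 by move/eqP; rewrite mulf_eq0 orbb => /eqP.
  apply: h; first by move=> k _; apply: mulr_ge0; apply: Gnn.
  by rewrite -[RHS]X0 mxE; apply: eq_bigr => k _; rewrite (Gsym S u k).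
have := @QGE S u u S0; rewrite eqxx big1 // => [/eqP|k _]; last by rewrite h mulr0.
by rewrite eq_sym oner_eq0.
Qed.

Lemma delta_pos (S : {set 'I_n}) u : S != set0 -> u \notin S -> 0 < F S - F (S :|: [set u]).
Proof.
move=> S0 uS; rewrite delta_F //; apply: mulr_gt0; last by apply: X_pos.
have := kpos u; have := @Gnn S u u S0 => h1 h2.
apply: divr_gt0 => //; nra.
Qed.

Lemma F_nn (S : {set 'I_n}) : S != set0 -> 0 <= F S.
Proof. by move=> S0; rewrite /trQinv /mxtrace; apply: sumr_ge0 => i _; apply: Gnn. Qed.

Lemma pathsum (S : {set 'I_n}) u v : S != set0 ->
  invmx (Q S) u v * (invmx (Q S) *m invmx (Q S)) u u <=
  invmx (Q S) u u * (invmx (Q S) *m invmx (Q S)) u v.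
Proof.
move=> S0; set G := invmx (Q S); rewrite -subr_ge0.
have -> : G u u * (G *m G) u v - G u v * (G *m G) u u =
   \sum_i G u i * (G u u * G i v - G u v * G i u).
  rewrite !mxE !mulr_sumr -sumrB; apply: eq_bigr => i _; ring.
by apply: sumr_ge0 => i _; apply: mulr_ge0; [apply: Gnn | apply: Gpath].
Qed.

Lemma Gup_entry (G : 'M[R]_n) a u i j :
  (G - a *: (G *m delta_mx u u *m G)) i j = G i j - a * (G i u * G u j).
Proof. by rewrite -AEB !mxE. Qed.

Lemma sq_update (G : 'M[R]_n) a u v :
  ((G - a *: (G *m delta_mx u u *m G)) *m (G - a *: (G *m delta_mx u u *m G))) v v =
  (G *m G) v v - a * G v u * (G *m G) u v - a * G u v * (G *m G) v u
  + a ^+ 2 * G v u * G u v * (G *m G) u u.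
Proof.
rewrite mxE.
transitivity (\sum_i (G v i * G i v - a * G v u * (G u i * G i v)
   - a * G u v * (G v i * G i u) + a ^+ 2 * G v u * G u v * (G u i * G i u))).
  by apply: eq_bigr => i _; rewrite !Gup_entry; ring.
rewrite !big_split /= !sumrN -!mulr_sumr !mxE.
done.
Qed.

Lemma supmod (A : {set 'I_n}) (u v : 'I_n) : A != set0 -> v \notin A -> u != v ->
  F (A :|: [set u]) - F (A :|: [set u] :|: [set v]) <= F A - F (A :|: [set v]).
Proof.
move=> A0 vA uv.
case: (boolP (u \in A)) => uA.
  by have -> : A :|: [set u] = A by apply/setUidPl; rewrite sub1set.
have A1 := nonemptyU A u.
have vA1 : v \notin A :|: [set u] by rewrite !inE negb_or vA eq_sym uv.
have qpos := @Gnn _ v v A1.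
rewrite delta_F // delta_F //.
rewrite inv_update // in qpos *.
set G := invmx (Q A); set a := kappa u / (1 + kappa u * G u u).
rewrite sq_update Gup_entry.
rewrite Gup_entry in qpos.
have p1 := @pathsum A u v A0.
have p2 := @pathsum A v u A0.
rewrite -/G (Gsym A v u) (GG_sym A v u) -/G in p2 *.
rewrite -/G (Gsym A v u) -/G mulrA in qpos.
rewrite mulrA.
have hp := @Gnn A u u A0; have hc := kpos u.
have hp' : 0 <= G u u by [].
have hd : 0 < 1 + kappa u * G u u.
  by apply: (lt_le_trans ltr01); rewrite lerDl; apply: mulr_ge0 => //; apply: ltW.
apply: (@key R a (kappa v) (G u u) (G v v) (G u v) ((G *m G) u u) ((G *m G) v v) ((G *m G) u v)).
- by rewrite /a; apply: divr_ge0; [apply: ltW | apply: ltW].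
- rewrite /a mulrAC ler_pdivrMr // mul1r lerDr; exact: ler01.
- by apply: ltW.
- by apply: Gnn.
- by apply: Gnn.
- by apply: GG_nn.
- by apply: GG_nn.
- by apply: GG_nn.
- exact: p1.
- exact: p2.
- exact: qpos.
Qed.


Lemma setin_cons (w : 'I_n) (t : seq 'I_n) : [set x in w :: t] = w |: [set x in t].
Proof. by apply/setP => x; rewrite !inE. Qed.

Lemma setU_cons (A : {set 'I_n}) (w : 'I_n) (t : seq 'I_n) :
  A :|: [set x in w :: t] = (A :|: [set x in t]) :|: [set w].
Proof. by rewrite setin_cons setUCA setUC. Qed.

Lemma nonemptyUl (A B : {set 'I_n}) : A != set0 -> A :|: B != set0.
Proof. by case/set0Pn => x xA; apply/set0Pn; exists x; rewrite inE xA. Qed.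

Lemma mono1 (A : {set 'I_n}) (w : 'I_n) : A != set0 -> F (A :|: [set w]) <= F A.
Proof.
move=> A0; case: (boolP (w \in A)) => wA.
  by have -> : A :|: [set w] = A by apply/setUidPl; rewrite sub1set.
by have := @delta_pos A w A0 wA; rewrite subr_gt0 => /ltW.
Qed.

Lemma mono_seq (A : {set 'I_n}) (t : seq 'I_n) : A != set0 -> F (A :|: [set x in t]) <= F A.
Proof.
move=> A0; elim: t => [|w t IH].
  have -> : [set x in ([::] : seq 'I_n)] = set0 by apply/setP => x; rewrite !inE.
  by rewrite setU0.
rewrite setU_cons; apply: le_trans IH; apply: mono1; exact: nonemptyUl.
Qed.

Lemma setin_enum (T : {set 'I_n}) : [set x in enum T] = T.
Proof. by apply/setP => x; rewrite inE mem_enum. Qed.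

Lemma mono (A T : {set 'I_n}) : A != set0 -> F (A :|: T) <= F A.
Proof. by move=> A0; rewrite -(setin_enum T); apply: mono_seq. Qed.

Lemma supgen (A : {set 'I_n}) (t : seq 'I_n) (w : 'I_n) : A != set0 -> w \notin A :|: [set x in t] ->
  F (A :|: [set x in t]) - F (A :|: [set x in t] :|: [set w]) <= F A - F (A :|: [set w]).
Proof.
move=> A0; elim: t => [|u t IH].
  have -> : [set x in ([::] : seq 'I_n)] = set0 by apply/setP => x; rewrite !inE.
  by rewrite setU0.
rewrite setU_cons => wn.
have wn' : w \notin A :|: [set x in t].
  by apply: contra wn; rewrite !inE => /orP [->|->]; rewrite ?orbT.
have uw : u != w.
  by apply: contra wn => /eqP ->; rewrite !inE eqxx orbT.
apply: le_trans (IH wn').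
apply: supmod => //; exact: nonemptyUl.
Qed.

Lemma DR (A : {set 'I_n}) (t : seq 'I_n) : A != set0 ->
  F A - F (A :|: [set x in t]) <= \sum_(w <- t) (F A - F (A :|: [set w])).
Proof.
move=> A0; elim: t => [|w t IH].
  have -> : [set x in ([::] : seq 'I_n)] = set0 by apply/setP => x; rewrite !inE.
  by rewrite setU0 subrr big_nil.
rewrite big_cons setU_cons.
have -> : F A - F (A :|: [set x in t] :|: [set w]) =
  (F (A :|: [set x in t]) - F (A :|: [set x in t] :|: [set w])) + (F A - F (A :|: [set x in t])).
  by ring.
apply: lerD => //.
case: (boolP (w \in A :|: [set x in t])) => wn; last by apply: supgen.
have -> : A :|: [set x in t] :|: [set w] = A :|: [set x in t] by apply/setUidPl; rewrite sub1set.
by rewrite subrr subr_ge0; apply: mono1.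
Qed.

Lemma greedy_main k Sg hhat B : (1 <= k)%N -> greedy_output e kappa k Sg ->
  is_opt_value e kappa k hhat -> is_B e kappa B ->
  ((#|Sg| < k)%N -> Hval e kappa Sg = hhat) /\
  (#|Sg| = k -> Hval e kappa Sg <= (1 - (expR 1)^-1) * hhat + B / expR 1).
Proof.
move=> k1 [s [/andP [s0 sk] hinit hstep Sgdef hstop]] [[So fSo HSo] Hopt] [[vB HvB] HB].
have /hasP [x0 _ _] : has predT s by rewrite has_predT.
have SiS : forall i, (i < size s)%N -> pre s i.+1 = pre s i :|: [set nth x0 s i].
  move=> i hi; rewrite /pre (take_nth x0 hi); apply/setP => x.
  by rewrite !inE mem_rcons in_cons orbC.
have nn : forall i, (i < size s)%N -> nth x0 s i \notin pre s i.
  move=> i hi; case: (posnP i) => [->|ip]; first by rewrite /pre take0 inE.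
  by have := hstep i x0; rewrite ip hi => /(_ isT) [].
have card : forall i, (i <= size s)%N -> #|pre s i| = i.
  elim => [|i IH] hi.
    by rewrite /pre take0; apply/eqP; rewrite cards_eq0; apply/eqP/setP => x; rewrite !inE.
  by rewrite SiS // setUC cardsU1 nn // IH ?(ltnW hi).
have cardSg : #|Sg| = size s.
  have -> : Sg = pre s (size s) by rewrite Sgdef /pre take_size.
  exact: card.
have Si_ne : forall i, (0 < i <= size s)%N -> pre s i != set0.
  by move=> i /andP [ip hi]; rewrite -card_gt0 card.
have Sg0 : Sg != set0 by rewrite -card_gt0 cardSg.
have So0 : So != set0 by case/andP: fSo.
have [w wSo] := set0Pn _ So0.
have FoB : F So <= B.
  have -> : So = [set w] :|: So by apply/esym/setUidPr; rewrite sub1set.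
  by apply: le_trans (HB w); apply: mono; rewrite -card_gt0 cards1.
have Fo0 : 0 <= F So := @F_nn So So0.
split.
  move=> ltk; have sk' : (size s < k)%N by rewrite -cardSg.
  have SgT : Sg = setT.
    case: (hstop sk') => [/eqP|[v vS [_ hle]]].
      by rewrite setD_eq0 => sub; apply/eqP; rewrite eqEsubset subsetT.
    by have := @delta_pos Sg v Sg0 vS; rewrite subr_gt0 ltNge hle.
  apply: le_anti; apply/andP; split.
    rewrite -HSo /Hval.
    have : F Sg <= F So by rewrite SgT -(setUT So); apply: mono.
    lra.
  by apply: Hopt; rewrite /feasible Sg0 /= ltnW.
move=> eqk; have sz : size s = k by rewrite -cardSg.
set Fo := F So.
have K0 : 0 < (k%:R : R) by rewrite ltr0n.
have rho0 : 0 <= 1 - (k%:R : R)^-1 by rewrite subr_ge0 invf_le1 // ler1n.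
have step : forall i, (0 < i < k)%N ->
    F (pre s i.+1) - Fo <= (1 - (k%:R : R)^-1) * (F (pre s i) - Fo).
  move=> i /andP [ip ik].
  have hi : (i < size s)%N by rewrite sz.
  have := hstep i x0; rewrite ip hi => /(_ isT) /= [vn hmin hlt].
  have eA : [set x in take i s] = pre s i by [].
  rewrite eA in vn hmin hlt.
  rewrite SiS //.
  set A := pre s i in vn hmin hlt *; set v := nth x0 s i in vn hmin hlt *.
  have A0 : A != set0 by apply: Si_ne; rewrite ip ltnW.
  have dr := @DR A (enum So) A0; rewrite setin_enum in dr.
  set d := F A - F (A :|: [set v]).
  have d0 : 0 <= d by rewrite /d; lra.
  have bound : \sum_(w <- enum So) (F A - F (A :|: [set w])) <= (#|So|)%:R * d.
    have : \sum_(w <- enum So) (F A - F (A :|: [set w])) <= \sum_(w <- enum So) d.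
      apply: ler_sum => u _; case: (boolP (u \in A)) => uA.
        have -> : A :|: [set u] = A by apply/setUidPl; rewrite sub1set.
        by rewrite subrr.
      by have := hmin u uA; rewrite /d; lra.
    by rewrite !big_enum /= sumr_const mulr_natl.
  have kb : (#|So|)%:R * d <= k%:R * d.
    by apply: ler_wpM2r => //; rewrite ler_nat; case/andP: fSo.
  have mo : F (A :|: So) <= Fo by rewrite setUC; apply: mono.
  have xb : F A - Fo <= k%:R * d by lra.
  have : (F A - Fo) / k%:R <= d by rewrite ler_pdivrMr // mulrC.
  have -> : (1 - (k%:R : R)^-1) * (F A - Fo) = (F A - Fo) - (F A - Fo) / k%:R by ring.
  rewrite /d; lra.
have iter : forall j, (1 <= j <= k)%N ->
    F (pre s j) - Fo <= (1 - (k%:R : R)^-1) ^+ j.-1 * (F (pre s 1) - Fo).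
  elim => [//|j IH] /andP [j1 jk].
  case: j IH j1 jk => [|j] IH _ jk; first by rewrite expr0 mul1r.
  have h1 := step j.+1 jk.
  have h2 := IH (ltnW jk).
  apply: (le_trans h1); rewrite /= exprS -mulrA; apply: ler_wpM2l => //.
have FgE : F Sg = F (pre s k) by rewrite Sgdef /pre -sz take_size.
have F1B : F (pre s 1) <= B by rewrite (pre1 s x0 s0); apply: HB.
have goalF : F Sg <= (Fo + B) / 2.
  case: (eqVneq k 1) => [k1'|kn1].
    have Sow : So = [set w].
      apply/eqP; rewrite eq_sym eqEcard sub1set wSo cards1.
      by case/andP: fSo => _; rewrite k1'.
    have : F Sg <= Fo.
      by rewrite FgE k1' (pre1 s x0 s0) /Fo Sow; apply: hinit.
    lra.
  have k2 : (2 <= k)%N by rewrite ltn_neqAle eq_sym kn1 k1.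
  have ch := @c_half R k k2.
  set c := (1 - (k%:R : R)^-1) ^+ k.-1 in ch.
  have c0 : 0 <= c by apply: exprn_ge0.
  have it := iter k; rewrite k1 leqnn /= in it; have := it isT => itk.
  rewrite FgE.
  have : c * (F (pre s 1) - Fo) <= (B - Fo) / 2.
    case: (lerP 0 (F (pre s 1) - Fo)) => hd.
      have : c * (F (pre s 1) - Fo) <= 2^-1 * (F (pre s 1) - Fo).
        by apply: ler_wpM2r => //; lra.
      lra.
    have : c * (F (pre s 1) - Fo) <= 0 by apply: mulr_ge0_le0 => //; apply: ltW.
    lra.
  rewrite /c in itk *; lra.
rewrite /Hval -HSo; apply: final_arith => //.
Qed.

End Proof3.

Theorem theorem3 (R : realType) (n : nat) (e : rel 'I_n) (kappa : 'I_n -> R)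
  (k : nat) (Sg : {set 'I_n}) (hhat B : R) :
  simple_graph e -> connected_graph e ->
  (forall i, 0 < kappa i) ->
  (1 <= k)%N ->
  greedy_output e kappa k Sg ->
  is_opt_value e kappa k hhat ->
  is_B e kappa B ->
  ((#|Sg| < k)%N -> Hval e kappa Sg = hhat) /\
  (#|Sg| = k ->
     Hval e kappa Sg <= (1 - (expR 1)^-1) * hhat + B / expR 1).
Proof.
move=> [hs hi] hc hk.
exact: (@greedy_main R n e kappa hs hi hc hk k Sg hhat B).
Qed.
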